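(* Any amendment strategy is outcome-equivalent to the insertion-sort strategy.
   Context: Let $\mathcal{X}=\{1,\dots,n\}$, labelled so that the chair's preference (a ranking) is $1\succ\cdots\succ n$. A proto-ranking is an irreflexive transitive relation on $\mathcal{X}$; a ranking is a total proto-ranking; a tournament is a total asymmetric relation on $\mathcal{X}$. Interaction: given a tournament $\mathrel{W}$, start from $R_0=\varnothing$; in each period with $R_{t-1}$ not total the chair offers a pair $\{x,y\}$ unranked by $R_{t-1}$, the winner is $x$ if $x\mathrel{W}y$ and $y$ otherwise, and $R_t$ is the transitive closure of $R_{t-1}\cup\{(\text{winner},\text{loser})\}$; stop when $R_t$ is total. A strategy assigns to each non-terminal history (sequence of (winner, loser) pairs) a pair unranked at it; its outcome under $\mathrel{W}$ is the final ranking. Two strategies are outcome-equivalent if they have the same outcome under every tournament. Insertion-sort strategy: at a history with current proto-ranking $R$, let $L(z)=\{w: z\succ w,\ \text{neither } zRw\text{ nor } wRz\}$; let $x$ be the $\succ$-worst alternative with $L(x)\ne\varnothing$ and $y$ the $R$-highest element of $L(x)$; offer $\{x,y\}$. Amendment algorithm on a set $\{a_1\succ\cdots\succ a_m\}$: pit $a_{m-1}$ against $a_m$, then $a_{m-2}$ against the winner, then $a_{m-3}$ against the previous winner, etc.; the winner of the last round is the final winner. Recursive-amendment algorithm: run the amendment algorithm on $\mathcal{X}$ to get final winner $y_1$; run it on $\mathcal{X}\setminus\{y_1\}$ to get $y_2$; on $\mathcal{X}\setminus\{y_1,y_2\}$ to get $y_3$; and so on, where whenever the algorithm demands a vote on a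 pair already ranked as $xRy$ no vote is held and it is treated as if $x$ had won. An amendment strategy is any strategy whose behaviour along every history generated by it and some tournament coincides with the recursive-amendment algorithm. *)

(* Defs.v *)
From mathcomp Require Import all_boot.
Set Implicit Arguments. Unset Strict Implicit. Unset Printing Implicit Defensive.

Section Agenda.
Variable n : nat.
(* Alternatives: 'I_n ; the chair's ranking is  i ≻ j  iff  i < j  (as naturals). *)
Notation A := 'I_n.

(* A history: sequence of (winner, loser) pairs. *)
Definition history := seq (A * A).

Definition hrel (h : history) : rel A := fun x y => (x, y) \in h.

(* Proto-ranking generated by a history: transitive closure of its pairs. *)
Definition tc (h : history) : rel A :=
  fun x y => [exists z, hrel h x z && connect (hrel h) z y].

Definition total_rel (R : rel A) : bool :=
  [forall x, forall y, (x != y) ==> (R x y || R y x)].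

Definition unranked (R : rel A) (x y : A) : bool :=
  [&& x != y, ~~ R x y & ~~ R y x].

Definition tournament (W : rel A) : Prop :=
  (forall x y, x != y -> W x y || W y x) /\ (forall x y, W x y -> ~~ W y x).

(* Outcome of a vote on the (unordered) pair {p.1, p.2}: (winner, loser). *)
Definition play (W : rel A) (p : A * A) : A * A :=
  if W p.1 p.2 then p else (p.2, p.1).

Fixpoint is_hist_aux (pre rest : history) : bool :=
  match rest with
  | [::] => true
  | p :: r => unranked (tc pre) p.1 p.2 && is_hist_aux (rcons pre p) r
  end.
Definition is_history (h : history) : bool := is_hist_aux [::] h.

(* A strategy offers a pair (p.1, p.2), read as the unordered pair {p.1,p.2}. *)
Definition strategy := history -> A * A.

Definition is_strategy (s : strategy) : Prop :=
  forall h, is_history h -> ~~ total_rel (tc h) ->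
    unranked (tc h) (s h).1 (s h).2.

Fixpoint run (s : strategy) (W : rel A) (k : nat) : history :=
  match k with
  | 0 => [::]
  | k'.+1 => let h := run s W k' in
             if total_rel (tc h) then h else rcons h (play W (s h))
  end.

(* n*n periods suffice for any strategy to reach a total ranking. *)
Definition outcome (s : strategy) (W : rel A) : rel A := tc (run s W (n * n)).

Definition outcome_equiv (s s' : strategy) : Prop :=
  forall W, tournament W -> outcome s W =2 outcome s' W.

(* Insertion-sort strategy (d is a dummy default, never used at
   non-terminal histories reached in play). *)
Definition Lset (R : rel A) (z : A) : pred A :=
  [pred w : A | (z < w) && unranked R z w].

Definition insertion_sort (d : A) : strategy := fun h =>
  let R := tc h in
  match [pick x | ~~ pred0b (Lset R x) &
                  [forall x', ~~ pred0b (Lset R x') ==> (x' <= x)]] with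
  | Some x =>
      match [pick y in Lset R x |
               [forall w in Lset R x, (w != y) ==> R y w]] with
      | Some y => (x, y)
      | None => (d, d)
      end
  | None => (d, d)
  end.

Definition amend_step (W : rel A) (st : A * history) (a : A) : A * history :=
  let: (c, h) := st in
  let R := tc h in
  if R a c then (a, h)
  else if R c a then (c, h)
  else let p := play W (a, c) in (p.1, rcons h p).

(* Amendment algorithm on xs = [a_1; ...; a_m] (listed in ≻ order):
   a_{m-1} vs a_m, then a_{m-2} vs the winner, etc. *)
Definition amend (W : rel A) (h : history) (xs : seq A) : option (A * history) :=
  match rev xs with
  | [::] => None
  | c :: rest => Some (foldl (amend_step W) (c, h) rest)
  end.

Fixpoint rec_amend_aux (W : rel A) (k : nat) (X : seq A) (h : history) : history :=
  match k with
  | 0 => h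
  | k'.+1 => match amend W h X with
             | None => h
             | Some (y, h') => rec_amend_aux W k' (rem y X) h'
             end
  end.

Definition rec_amend (W : rel A) : history := rec_amend_aux W n (enum A) [::].

Definition amendment_strategy (s : strategy) : Prop :=
  is_strategy s /\ forall W, tournament W -> run s W (n * n) = rec_amend W.

End Agenda.

(* Main.v *)
Require Import Defs.
From mathcomp Require Import all_boot zify.
Set Implicit Arguments. Unset Strict Implicit. Unset Printing Implicit Defensive.

Section Lists.
Variable n : nat.
Notation A := 'I_n.
Variable W : rel A.
Hypothesis HW : tournament W.

Lemma Wanti x y : x != y -> W x y = ~~ W y x.
Proof.
case: HW => Ht Ha xy; case Wxy: (W x y); first by rewrite (Ha _ _ Wxy).
by have := Ht _ _ xy; rewrite Wxy /= => ->.
Qed.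

Fixpoint bef (s : seq A) (u v : A) : bool :=
  if s is z :: s' then (if z == u then v \in s' else if z == v then false else bef s' u v)
  else false.

Lemma bef_mem s u v : bef s u v -> (u \in s) && (v \in s).
Proof.
elim: s => //= z s IH.
case: eqP => [<- Hv|zu]; first by rewrite mem_head inE Hv orbT.
case: eqP => [//|zv] /IH /andP[H1 H2]; by rewrite !inE H1 H2 !orbT.
Qed.

Lemma bef_irr s u : uniq s -> bef s u u = false.
Proof.
elim: s => //= z s IH /andP[zs us].
case: eqP => [<-|_]; first by apply/negbTE.
by rewrite IH.
Qed.

Lemma bef_asym s u v : uniq s -> bef s u v -> bef s v u -> False.
Proof.
elim: s => //= z s IH /andP[zs us].
have [<-|zu] := eqVneq z u.
  have [zv|zv] := eqVneq z v; last by [].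
  by subst v; rewrite (negbTE zs).
have [zv|zv] := eqVneq z v; first by [].
exact: IH.
Qed.

Lemma bef_trans s u v w : uniq s -> bef s u v -> bef s v w -> bef s u w.
Proof.
elim: s => //= z s IH /andP[zs us].
have [zu|zu] := eqVneq z u; move=> Hv.
  subst u.
  have [zv|zv] := eqVneq z v; first by rewrite zv Hv in zs.
  have [zw|zw] := eqVneq z w; first by [].
  by move/bef_mem => /andP[_ ->].
move: Hv; have [zv|zv] := eqVneq z v; first by [].
have [zw|zw] := eqVneq z w; first by [].
exact: IH.
Qed.

Lemma bef_total s u v : u \in s -> v \in s -> u != v -> bef s u v || bef s v u.
Proof.
elim: s => //= z s IH; rewrite !inE => Hu Hv uv.
have [zu|zu] := eqVneq z u.
  subst u; move: Hv; have [vz|vz] := eqVneq v z => /= Hv; first by rewrite vz eqxx in uv.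
  by rewrite Hv.
have [zv|zv] := eqVneq z v.
  by subst v; move: Hu; rewrite eq_sym (negbTE zu) /= => ->.
move: Hu Hv; rewrite !(eq_sym _ z) (negbTE zu) (negbTE zv) /=.
by move=> Hu Hv; apply: IH.
Qed.

Lemma bef_first s (P : pred A) : uniq s -> has P s ->
  exists m, [/\ P m, m \in s & forall w, P w -> w \in s -> w != m -> bef s m w].
Proof.
elim: s => //= z s IH /andP[zs us].
case Pz: (P z) => /= Hs.
  exists z; split => //; first exact: mem_head.
  by move=> w _; rewrite inE eqxx; case: eqP.
have [m [Pm ms Hm]] := IH us Hs.
exists m; split => //; first by rewrite inE ms orbT.
move=> w Pw; rewrite inE => /orP[/eqP wz|ws] wm; first by subst; rewrite Pw in Pz.
have [zm|_] := eqVneq z m; first by subst; rewrite Pm in Pz.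
have [zw|_] := eqVneq z w; first by subst; rewrite Pw in Pz.
exact: Hm.
Qed.

Fixpoint ins (x : A) (L : seq A) : seq A :=
  if L is y :: L' then (if W x y then x :: L else y :: ins x L') else [:: x].

Lemma mem_ins x L y : (y \in ins x L) = (y == x) || (y \in L).
Proof.
elim: L => [|z L IH] /=; first by rewrite inE orbF.
case: (W x z); first by rewrite inE.
by rewrite !inE IH orbCA.
Qed.

Lemma uniq_ins x L : uniq (ins x L) = (x \notin L) && uniq L.
Proof.
elim: L => [|z L IH] //=.
case: (W x z) => /=; first by [].
rewrite IH mem_ins !inE negb_or (eq_sym z x).
by case: (x == z); case: (x \in L); case: (z \in L).
Qed.

Lemma bef_ins x L u v : u != x -> v != x -> bef (ins x L) u v = bef L u v.
Proof.
move=> ux vx; elim: L => [|z L IH] /=.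
  by rewrite (eq_sym x u) (negbTE ux) (eq_sym x v) (negbTE vx).
case: (W x z) => /=.
  by rewrite (eq_sym x u) (negbTE ux) (eq_sym x v) (negbTE vx).
by rewrite mem_ins (negbTE vx) IH.
Qed.

Lemma key_list L x c : x \notin L -> uniq L -> c \in L ->
  (forall d, d \in L -> bef L d c -> bef (ins x L) d x) ->
  W x c = bef (ins x L) x c.
Proof.
elim: L => //= y L IH; rewrite inE negb_or => /andP[xy xL] /andP[yL uL].
rewrite inE => /orP[/eqP cy|cL] H.
  subst c; case Wxy: (W x y) => /=; first by rewrite eqxx mem_head.
  by rewrite (eq_sym y x) (negbTE xy) eqxx.
have cy : c != y by apply: contraNneq yL => <-.
have := H y (mem_head _ _); rewrite eqxx cL => /(_ isT).
case Wxy: (W x y) => /=.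
  by rewrite (negbTE xy) eqxx.
rewrite (eq_sym y x) (negbTE xy) (eq_sym y c) (negbTE cy) => _.
apply: IH => // d dL Hd.
have dy : d != y by apply: contraNneq yL => <-.
have := H d; rewrite inE dL orbT => /(_ isT).
rewrite Wxy /= (eq_sym y d) (negbTE dy) (eq_sym y c) (negbTE cy) (eq_sym y x) (negbTE xy).
by apply.
Qed.


Lemma mem_foldr s y : (y \in foldr ins [::] s) = (y \in s).
Proof. by elim: s => //= z s IH; rewrite mem_ins IH inE. Qed.

Lemma uniq_foldr s : uniq (foldr ins [::] s) = uniq s.
Proof. by elim: s => //= z s IH; rewrite uniq_ins IH mem_foldr. Qed.

Lemma bef_foldr pre L u v : u \notin pre -> v \notin pre ->
  bef (foldr ins L pre) u v = bef L u v.
Proof.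
elim: pre => //= z pre IH; rewrite !inE !negb_or => /andP[uz up] /andP[vz vp].
by rewrite bef_ins // IH.
Qed.

Definition piW := foldr ins [::] (enum A).

Lemma mem_pi u : u \in piW.
Proof. by rewrite mem_foldr mem_enum. Qed.

Lemma uniq_pi : uniq piW.
Proof. by rewrite uniq_foldr enum_uniq. Qed.

Lemma mem_drop_enum k (u : A) : (u \in drop k (enum A)) = (k <= u).
Proof.
rewrite -(mem_map val_inj) map_drop val_enum_ord drop_iota mem_iota add0n.
have := ltn_ord u; case: (leqP k u) => /= H1 H2; apply/idP/idP => //; lia.
Qed.

Lemma mem_take_enum k (u : A) : (u \in take k (enum A)) = (u < k).
Proof.
rewrite -(mem_map val_inj) map_take val_enum_ord take_iota mem_iota add0n /=.
have := ltn_ord u => H; apply/idP/idP => H1; lia.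
Qed.

Lemma drop_enum_cons (x : A) : drop x (enum A) = x :: drop x.+1 (enum A).
Proof. by rewrite (drop_nth x) ?size_enum_ord ?ltn_ord // nth_ord_enum. Qed.

Lemma pi_suffix k (u v : A) : k <= u -> k <= v ->
  bef piW u v = bef (foldr ins [::] (drop k (enum A))) u v.
Proof.
move=> ku kv.
have -> : piW = foldr ins (foldr ins [::] (drop k (enum A))) (take k (enum A)).
  by rewrite -foldr_cat cat_take_drop.
rewrite bef_foldr //.
  by rewrite mem_take_enum -leqNgt.
by rewrite mem_take_enum -leqNgt.
Qed.

Lemma key_pi (x c : A) : x < c -> (forall d : A, x < d -> bef piW d c -> bef piW d x) ->
  W x c = bef piW x c.
Proof.
move=> xc H.
set L := foldr ins [::] (drop x.+1 (enum A)).
have E (u v : A) : x <= u -> x <= v -> bef piW u v = bef (ins x L) u v.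
  by move=> xu xv; rewrite (pi_suffix xu xv) drop_enum_cons.
have xc' : x <= c by apply: ltnW.
rewrite (E _ _ (leqnn _) xc').
have xne (y : A) : x < y -> y != x by move=> xy; apply/eqP => yx; rewrite yx ltnn in xy.
apply: key_list.
- by rewrite mem_foldr mem_drop_enum ltnn.
- by rewrite uniq_foldr drop_uniq ?enum_uniq.
- by rewrite mem_foldr mem_drop_enum.
move=> d; rewrite mem_foldr mem_drop_enum => xd Hd.
have xd' : x <= d by apply: ltnW.
rewrite -(E _ _ xd' (leqnn _)); apply: H => //.
by rewrite (E _ _ xd' xc') bef_ins // ?xne.
Qed.

End Lists.

Section TC.
Variable n : nat.
Notation A := 'I_n.

Lemma hrel_tc (h : history n) x y : hrel h x y -> tc h x y.
Proof. by move=> H; apply/existsP; exists y; rewrite H connect0. Qed.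

Lemma tc_trans (h : history n) x y z : tc h x y -> tc h y z -> tc h x z.
Proof.
move=> /existsP[a /andP[xa ay]] /existsP[b /andP[yb bz]].
apply/existsP; exists a; rewrite xa /=.
apply: connect_trans ay _; apply: connect_trans bz.
exact: connect1.
Qed.

Lemma tc_Q (h : history n) (Q : rel A) : transitive Q ->
  (forall p, p \in h -> Q p.1 p.2) -> forall x y, tc h x y -> Q x y.
Proof.
move=> tQ hQ x y /existsP[z /andP[xz /connectP[p pth ->]]].
have Qxz : Q x z by exact: (hQ (x, z)).
clear xz; elim: p z Qxz pth => //= w p IH z Qxz /andP[zw pth].
apply: (IH w) => //; exact: (tQ z x w Qxz (hQ (z, w) zw)).
Qed.

Lemma tc_mono (h h' : history n) x y : {subset h <= h'} -> tc h x y -> tc h' x y.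
Proof.
move=> sub /existsP[z /andP[xz zy]]; apply/existsP; exists z.
rewrite /hrel (sub _ xz) /=.
apply: connect_sub zy => a b ab; apply: connect1; exact: sub.
Qed.

Lemma tc_last (h : history n) p : tc (rcons h p) p.1 p.2.
Proof. by apply: hrel_tc; rewrite /hrel mem_rcons -surjective_pairing mem_head. Qed.

Lemma tc_eqQ (h : history n) (Q : rel A) : transitive Q ->
  (forall x y, Q x y -> Q y x -> False) ->
  (forall p, p \in h -> Q p.1 p.2) -> total_rel (tc h) ->
  forall x y, tc h x y = Q x y.
Proof.
move=> tQ aQ hQ tot x y; apply/idP/idP; first exact: tc_Q.
move=> Qxy; have xy : x != y.
  apply/eqP => exy; move: Qxy; rewrite exy => Hyy; exact: (aQ _ _ Hyy Hyy).
move: tot => /forallP/(_ x)/forallP/(_ y)/implyP/(_ xy)/orP[//|yx].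
by case: (aQ _ _ Qxy (tc_Q tQ hQ yx)).
Qed.

Lemma run_total (s : strategy n) (W : rel A) (Q : rel A) (x0 : A) :
  transitive Q -> (forall x, ~~ Q x x) ->
  (forall k, k <= n * n -> forall p, p \in run s W k -> Q p.1 p.2) ->
  (forall k, k < n * n -> ~~ total_rel (tc (run s W k)) ->
     unranked (tc (run s W k)) (s (run s W k)).1 (s (run s W k)).2) ->
  total_rel (tc (run s W (n * n))).
Proof.
move=> tQ iQ hQ hS.
pose cnt (h : history n) := #|[set p : A * A | tc h p.1 p.2]|.
have claim k : k <= n * n -> total_rel (tc (run s W k)) || (k <= cnt (run s W k)).
  elim: k => [|k IH] kn; first by rewrite leq0n orbT.
  rewrite /=; case Ht: (total_rel (tc (run s W k))); first by rewrite Ht.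
  have := IH (ltnW kn); rewrite Ht /= => Hk.
  apply/orP; right; apply: leq_ltn_trans Hk _.
  apply: proper_card; apply/properP; split.
    apply/subsetP => p; rewrite !inE; apply: tc_mono => q; rewrite mem_rcons inE => ->.
    by rewrite orbT.
  set h := run s W k.
  have := hS k kn; rewrite Ht => /(_ isT) /and3P[_ n1 n2].
  exists (play W (s h)); first by rewrite inE tc_last.
  by rewrite inE /play; case: (W _ _) => /=.
have := claim _ (leqnn _); case Ht: (total_rel _) => //= Hc.
have : cnt (run s W (n * n)) < #|[set: A * A]|.
  apply: proper_card; apply/properP; split; first exact: subsetT.
  exists (x0, x0); first by rewrite inE.
  rewrite inE /=; apply/negP => /(tc_Q tQ (hQ _ (leqnn _))); exact/negP.
by rewrite cardsT card_prod card_ord ltnNge Hc.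
Qed.

End TC.

Section Amend.
Variable n : nat.
Notation A := 'I_n.
Variable W : rel A.
Hypothesis HW : tournament W.

Notation Pi := (bef (piW W)).

Lemma Pi_trans : transitive Pi.
Proof. move=> y x z; exact: bef_trans (uniq_pi W). Qed.

Lemma Pi_asym x y : Pi x y -> Pi y x -> False.
Proof. exact: bef_asym (uniq_pi W). Qed.

Lemma Pi_irr x : ~~ Pi x x.
Proof. by rewrite bef_irr ?uniq_pi. Qed.

Lemma Pi_total x y : x != y -> Pi x y || Pi y x.
Proof. by apply: bef_total; rewrite mem_pi. Qed.

Definition consis (h : history n) := forall p, p \in h -> Pi p.1 p.2.

Lemma tcPi h x y : consis h -> tc h x y -> Pi x y.
Proof. by move=> Hc; apply: (tc_Q Pi_trans Hc). Qed.

Lemma consis_rcons h p : consis h -> Pi p.1 p.2 -> consis (rcons h p).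
Proof. by move=> Hc Hp q; rewrite mem_rcons inE => /orP[/eqP->|/Hc]. Qed.

Definition ltA : rel A := fun u v => u < v.

Definition suffix (X : seq A) := forall z x, z \notin X -> x \in X -> Pi z x.

Definition Inv (c : A) (h : history n) (Y : seq A) :=
  [/\ c \in Y, forall y, y \in Y -> y != c -> Pi c y & consis h].

Lemma Inv_a a c h Y : Inv c h Y -> Pi a c -> Inv a h (a :: Y).
Proof.
case=> cY top Hc ac; split => //; first exact: mem_head.
move=> y; rewrite inE => /orP[/eqP->|yY]; first by rewrite eqxx.
move=> ya; have [yc|yc] := eqVneq y c; first by rewrite yc.
exact: Pi_trans ac (top _ yY yc).
Qed.

Lemma Inv_c a c h Y : Inv c h Y -> Pi c a -> Inv c h (a :: Y).
Proof.
case=> cY top Hc ca; split => //; first by rewrite inE cY orbT.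
by move=> y; rewrite inE => /orP[/eqP->|yY] //; apply: top.
Qed.

Lemma step_ok (a c : A) h Y : Inv c h Y -> a < c ->
  (forall d : A, a < d -> Pi d c -> Pi d a) ->
  let st := amend_step W (c, h) a in Inv st.1 st.2 (a :: Y).
Proof.
move=> I ac Hd; have [cY top Hc] := I.
rewrite /amend_step.
case Rac: (tc h a c) => /=; first by apply: (Inv_a I); exact: tcPi Hc Rac.
case Rca: (tc h c a) => /=; first by apply: (Inv_c I); exact: tcPi Hc Rca.
have Ka := key_pi ac Hd.
rewrite /play /=; case Wac: (W a c) => /=.
  have Pac : Pi a c by rewrite -Ka.
  have [_ t2 _] := Inv_a I Pac; split => //; first exact: mem_head.
  by apply: consis_rcons.
have ane : a != c by apply/eqP => e; rewrite e ltnn in ac.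
have Pca : Pi c a by move: (Pi_total ane); rewrite -Ka Wac.
have [t1 t2 _] := Inv_c I Pca; split => //.
by apply: consis_rcons.
Qed.

Lemma fold_inv X : pairwise ltA X -> suffix X ->
  forall pre Y c h, X = pre ++ Y -> Inv c h Y ->
  let st := foldl (amend_step W) (c, h) (rev pre) in Inv st.1 st.2 X.
Proof.
move=> HP HS pre; elim/last_ind: pre => [|pre a IH] Y c h EX I.
  by rewrite EX.
rewrite rev_rcons.
have EX' : X = pre ++ a :: Y by rewrite EX cat_rcons.
have HP' := HP; rewrite EX' pairwise_cat /= in HP'.
case/and4P: HP' => Hall _ Ha _.
have cY : c \in Y by case: I.
have ac : a < c by move/allP: Ha => /(_ c cY).
have st := step_ok I ac.
have -> : foldl (amend_step W) (c, h) (a :: rev pre) =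
  foldl (amend_step W) (amend_step W (c, h) a) (rev pre) by [].
move: st.
case: (amend_step W (c, h) a) => c1 h1 st.
apply: (IH (a :: Y)) => //; apply: st.
move=> d ad Pdc.
case dX: (d \in X).
  move: dX; rewrite EX' mem_cat inE => /or3P[dpre|/eqP da|dY].
  - move/allrelP: Hall => /(_ d a dpre (mem_head _ _)) da.
    by have := ltn_trans ad da; rewrite ltnn.
  - by rewrite da ltnn in ad.
  - have [_ top _] := I.
    have [dc|dc] := eqVneq d c; first by rewrite dc (negbTE (Pi_irr c)) in Pdc.
    by case: (Pi_asym Pdc (top _ dY dc)).
apply: HS; first by rewrite dX.
by rewrite EX' mem_cat mem_head orbT.
Qed.

Lemma amend_inv X h st : pairwise ltA X -> suffix X -> consis h ->
  amend W h X = Some st -> Inv st.1 st.2 X.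
Proof.
case/lastP: X => [|pre c] HP HS Hc; first by [].
rewrite /amend rev_rcons => -[<-].
apply: (fold_inv HP HS (Y := [:: c])); first by rewrite cats1.
split => //; first exact: mem_head.
by move=> y; rewrite inE => /eqP ->; rewrite eqxx.
Qed.

Lemma rec_inv k X h : pairwise ltA X -> suffix X -> consis h ->
  consis (rec_amend_aux W k X h).
Proof.
elim: k X h => [|k IH] X h HP HS Hc //=.
case E: (amend W h X) => [[y h']|] //.
have [yX top Hc'] := amend_inv HP HS Hc E.
have uX : uniq X by apply: (pairwise_uniq (r := ltA)) => // x; exact: ltnn.
apply: IH => //.
- exact: subseq_pairwise (rem_subseq _ _) HP.
- move=> z x; rewrite !(mem_rem_uniq _ uX) !inE negb_and negbK => /orP[/eqP->|zX] /andP[xy xX].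
    exact: top.
  exact: HS.
Qed.

Lemma rec_amend_consis : consis (rec_amend W).
Proof.
apply: rec_inv => //.
- rewrite /ltA -(pairwise_map val ltn) val_enum_ord -sorted_pairwise.
    exact: iota_ltn_sorted.
  exact: ltn_trans.
- by move=> z x; rewrite mem_enum.
Qed.

End Amend.

Section Ins.
Variable n : nat.
Notation A := 'I_n.
Variable W : rel A.

Notation Pi := (bef (piW W)).

Lemma ins_step (d : A) (h : history n) : consis W h -> ~~ total_rel (tc h) ->
  let p := insertion_sort d h in
  unranked (tc h) p.1 p.2 && Pi (play W p).1 (play W p).2.
Proof.
move=> Hc nt.
set R := tc h.
have RPi u v : R u v -> Pi u v by apply: tcPi.
have ord_neq (u v : A) : u < v -> u != v.
  by move=> uv; apply/eqP => e; rewrite e ltnn in uv.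
have unr_sym u v : unranked R u v = unranked R v u.
  by rewrite /unranked eq_sym; case: (R u v); case: (R v u); rewrite ?andbF.
have ex : exists x0, ~~ pred0b (Lset R x0).
  move/forallPn: nt => [u /forallPn [v]]; rewrite negb_imply negb_or => /andP[uv /andP[nuv nvu]].
  case: (ltngtP u v) => [ltuv|ltvu|equv].
  - by exists u; apply/pred0Pn; exists v; rewrite /Lset /= ltuv /unranked uv nuv nvu.
  - by exists v; apply/pred0Pn; exists u; rewrite /Lset /= ltvu /unranked eq_sym uv nuv nvu.
  - by move: uv; rewrite (val_inj equv) eqxx.
rewrite /insertion_sort -/R.
case: pickP => [x /andP[Lx xmax] | none]; last first.
  case: ex => x0 H0.
  case: (@arg_maxnP _ x0 (fun i : A => ~~ pred0b (Lset R i)) (fun i : A => val i) H0) => i Hi maxi.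
  move: (none i); rewrite Hi /=; move/negbT/forallPn => [x' ].
  by rewrite negb_imply => /andP[H1 H2]; move: (maxi x' H1) => /= H3; rewrite H3 in H2.
have gt1 (u v : A) : x < u -> u < v -> R u v || R v u.
  move=> xu uv; case E: (R u v || R v u) => //.
  have : ~~ pred0b (Lset R u).
    apply/pred0Pn; exists v; rewrite /Lset /= uv /unranked ord_neq //.
    by move/negbT: E; rewrite negb_or.
  by move=> H; move/forallP/(_ u)/implyP/(_ H): xmax; rewrite leqNgt xu.
have gt (u v : A) : x < u -> x < v -> u != v -> R u v || R v u.
  move=> xu xv uv; case: (ltngtP u v) => [ltuv|ltvu|equv].
  - exact: gt1.
  - by rewrite orbC; apply: gt1.
  - by move: uv; rewrite (val_inj equv) eqxx.
case: pickP => [y /andP[yL ytop] | none]; last first.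
  have hasL : has (mem (Lset R x)) (piW W).
    case/pred0Pn: Lx => w wL; apply/hasP; exists w; [exact: mem_pi | exact: wL].
  have [m [Pm _ Hm]] := bef_first (uniq_pi W) hasL.
  have Pm' : m \in Lset R x := Pm.
  move: (none m); rewrite Pm' /=; move/negbT/forallPn => [w].
  rewrite negb_imply => /andP[wL]; rewrite negb_imply => /andP[wm nRmw].
  have := Hm w wL (mem_pi _ _) wm.
  have mw : m != w by rewrite eq_sym.
  move: wL Pm'; rewrite inE /= => /andP[xw _] /andP[xm _].
  case/orP: (gt m w xm xw mw) => [Rmw|Rwm]; first by rewrite Rmw in nRmw.
  by move=> Pmw; case: (Pi_asym Pmw (RPi _ _ Rwm)).
move: (yL); rewrite inE /= => /andP[xy Uxy].
rewrite /= Uxy /=.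
move: (Uxy) => /and3P[_ nRxy nRyx].
have Hd (e : A) : x < e -> Pi e y -> Pi e x.
  move=> xe Pey.
  have ey : e != y by apply/eqP => ey; rewrite ey (negbTE (Pi_irr W y)) in Pey.
  have Rey : R e y.
    case/orP: (gt e y xe xy ey) => // Rye.
    by case: (Pi_asym Pey (RPi _ _ Rye)).
  case eL: (e \in Lset R x).
    by move/forallP/(_ e)/implyP/(_ eL)/implyP/(_ ey): ytop => Rye; case: (Pi_asym Pey (RPi _ _ Rye)).
  move: eL; rewrite inE /= xe /unranked /= ord_neq //= => /negbT; rewrite negb_and !negbK.
  case/orP => [Rxe|Rex]; last exact: RPi.
  by have := tc_trans Rxe Rey; rewrite -/R (negbTE nRxy).
have K := key_pi xy Hd.
rewrite /play /=; case Wxy: (W x y) => /=; first by rewrite -K.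
have := Pi_total W (ord_neq _ _ xy); by rewrite -K Wxy.
Qed.

End Ins.

Section Run.
Variable n : nat.
Notation A := 'I_n.

Lemma is_hist_rcons (pre r : history n) p :
  is_hist_aux pre (rcons r p) = is_hist_aux pre r && unranked (tc (pre ++ r)) p.1 p.2.
Proof.
elim: r pre => [|q r IH] pre /=; first by rewrite cats0 andbT.
by rewrite IH cat_rcons andbA.
Qed.

Lemma unranked_play (R : rel A) W p : unranked R p.1 p.2 ->
  unranked R (play W p).1 (play W p).2.
Proof.
rewrite /play; case: (W _ _) => //=.
by rewrite /unranked eq_sym => /and3P[-> -> ->].
Qed.

Lemma run_hist (s : strategy n) W : is_strategy s -> forall k, is_history (run s W k).
Proof.
move=> Hs; elim=> [|k IH] //=.
case Ht: (total_rel _) => //.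
rewrite /is_history is_hist_rcons /=.
have IH' := IH; rewrite /is_history in IH'; rewrite IH' /=.
by apply: unranked_play; apply: Hs => //; rewrite Ht.
Qed.

Lemma run_sub (s : strategy n) W k m : k <= m -> {subset run s W k <= run s W m}.
Proof.
elim: m => [|m IH]; first by rewrite leqn0 => /eqP->.
rewrite leq_eqVlt => /orP[/eqP->//|]; rewrite ltnS => km p /(IH km) pk /=.
by case: (total_rel _) => //; rewrite mem_rcons inE pk orbT.
Qed.

Lemma run_consis_ins (d : A) W k : consis W (run (insertion_sort d) W k).
Proof.
elim: k => [|k IH] //=.
case Ht: (total_rel _) => //.
apply: consis_rcons => //.
by have /andP[] := ins_step d IH (negbT Ht).
Qed.

End Run.

Theorem proposition3 (n : nat) (hn : 0 < n) (s : strategy n) :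
  amendment_strategy s -> outcome_equiv s (insertion_sort (Ordinal hn)).
Proof.
case=> Hs Hrun W HW x y; rewrite /outcome.
set x0 : 'I_n := Ordinal hn.
have E1 : tc (run s W (n * n)) x y = bef (piW W) x y.
  have Hc : consis W (run s W (n * n)) by rewrite Hrun //; exact: rec_amend_consis.
  apply: (tc_eqQ (@Pi_trans _ W) (@Pi_asym _ W) Hc).
  apply: (run_total x0 (@Pi_trans _ W) (@Pi_irr _ W)).
  - by move=> k kn p pk; apply: Hc; exact: run_sub kn _ pk.
  - by move=> k _ nt; apply: (Hs _ _ nt); apply: run_hist.
have E2 : tc (run (insertion_sort x0) W (n * n)) x y = bef (piW W) x y.
  have Hc : consis W (run (insertion_sort x0) W (n * n)) by apply: run_consis_ins.
  apply: (tc_eqQ (@Pi_trans _ W) (@Pi_asym _ W) Hc).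
  apply: (run_total x0 (@Pi_trans _ W) (@Pi_irr _ W)).
  - by move=> k kn; apply: run_consis_ins.
  - move=> k _ nt.
    have Hk : consis W (run (insertion_sort x0) W k) by apply: run_consis_ins.
    by have /andP[] := ins_step x0 Hk nt.
by rewrite E1 E2.
Qed.
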